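(* Let $\boldsymbol{A},\boldsymbol{B},\boldsymbol{C}\in\mathbb{R}^2$ be three pairwise distinct points carrying scalar vorticities $\omega_A,\omega_B,\omega_C\in\mathbb{R}$. Define the effect of $\boldsymbol{A}$'s action on $\boldsymbol{B}$ on the interaction energy between $\boldsymbol{B}$ and $\boldsymbol{C}$ as \[D(\boldsymbol{A},\boldsymbol{B},\boldsymbol{C})=\nabla_{\boldsymbol{B}}\Big(\tfrac{1}{4\pi}\,\omega_B\,\omega_C\log\|\boldsymbol{B}-\boldsymbol{C}\|\Big)\cdot \boldsymbol{u}_{\boldsymbol{A}}(\boldsymbol{B}),\qquad \boldsymbol{u}_{\boldsymbol{A}}(\boldsymbol{B})=\frac{\omega_A}{2\pi}\,\frac{(\boldsymbol{B}-\boldsymbol{A})^{\perp}}{\|\boldsymbol{B}-\boldsymbol{A}\|^2},\] where $(x,y)^\perp=(-y,x)$, and the gradient is taken with respect to the position $\boldsymbol{B}$ with $\omega_B,\omega_C,\boldsymbol{C}$ held fixed. Then \[D(\boldsymbol{A},\boldsymbol{B},\boldsymbol{C})=-\,D(\boldsymbol{C},\boldsymbol{B},\boldsymbol{A}),\] i.e. $\boldsymbol{A}$'s action on $\boldsymbol{B}$ changes the interaction energy between $\boldsymbol{B}$ and $\boldsymbol{C}$ exactly oppositely to how $\boldsymbol{C}$'s action on $\boldsymbol{B}$ changes the interaction energy between $\boldsymbol{A}$ and $\boldsymbol{B}$.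
   Context: Setting: the 2-dimensional incompressible Euler equations in vorticity form, where the (scalar) vorticity is transported by the fluid (in coordinates advecting with the fluid, the vorticity of a fluid particle is constant and only its position changes), and velocity is obtained from vorticity by the 2D Biot–Savart law, so that the velocity induced at $\boldsymbol{B}$ by vorticity $\omega_A$ located at $\boldsymbol{A}$ is $\boldsymbol{u}_{\boldsymbol{A}}(\boldsymbol{B})$ as given. The 2D interaction energy between vortices $\omega(\boldsymbol{y})$ at $\boldsymbol{y}$ and $\omega(\boldsymbol{z})$ at $\boldsymbol{z}$ is $I_{2d}=\frac{1}{4\pi}\omega(\boldsymbol{y})\omega(\boldsymbol{z})\log\|\boldsymbol{z}-\boldsymbol{y}\|$. *)

(* Defs.v *)
From Stdlib Require Import Reals.
From Coquelicot Require Import Coquelicot.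
Open Scope R_scope.

Definition pt := (R * R)%type.

Definition vsub (p q : pt) : pt := (fst p - fst q, snd p - snd q).
Definition vscale (a : R) (p : pt) : pt := (a * fst p, a * snd p).
Definition dot (p q : pt) : R := fst p * fst q + snd p * snd q.
Definition perp (p : pt) : pt := (- snd p, fst p).
Definition enorm (p : pt) : R := sqrt (fst p ^ 2 + snd p ^ 2).

Definition grad (f : pt -> R) (p : pt) : pt :=
  (Derive (fun x => f (x, snd p)) (fst p),
   Derive (fun y => f (fst p, y)) (snd p)).

Definition uvel (wA : R) (A B : pt) : pt :=
  vscale (wA / (2 * PI) / (enorm (vsub B A)) ^ 2) (perp (vsub B A)).

Definition Deff (wA wB wC : R) (A B C : pt) : R :=
  dot (grad (fun b => 1 / (4 * PI) * wB * wC * ln (enorm (vsub b C))) B)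
      (uvel wA A B).

(* Main.v *)
Require Import Defs.
From Stdlib Require Import Reals Lra.
From Coquelicot Require Import Coquelicot.
Open Scope R_scope.

Lemma d1 (K c d x : R) : 0 < (x - c)^2 + d^2 ->
  Derive (fun x => K * ln (sqrt ((x - c)^2 + d^2))) x = K * (x - c) / ((x - c)^2 + d^2).
Proof.
  intros H. apply is_derive_unique.
  assert (Hs : 0 < sqrt ((x - c)^2 + d^2)) by (apply sqrt_lt_R0; lra).
  auto_derive.
  - replace ((x + - c) * ((x + - c) * 1) + d * (d * 1)) with ((x - c)^2 + d^2) by ring.
    repeat split; lra.
  - replace ((x + - c) * ((x + - c) * 1) + d * (d * 1)) with ((x - c)^2 + d^2) by ring.
    set (q := (x - c)^2 + d^2) in *. set (r := sqrt q) in *.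
    assert (Hq : q = r * r) by (unfold r; rewrite sqrt_sqrt; lra).
    rewrite Hq. field. lra.
Qed.

Lemma d2 (K c d x : R) : 0 < d^2 + (x - c)^2 ->
  Derive (fun x => K * ln (sqrt (d^2 + (x - c)^2))) x = K * (x - c) / (d^2 + (x - c)^2).
Proof.
  intros H. apply is_derive_unique.
  assert (Hs : 0 < sqrt (d^2 + (x - c)^2)) by (apply sqrt_lt_R0; lra).
  auto_derive.
  - replace (d * (d * 1) + (x + - c) * ((x + - c) * 1)) with (d^2 + (x - c)^2) by ring.
    repeat split; lra.
  - replace (d * (d * 1) + (x + - c) * ((x + - c) * 1)) with (d^2 + (x - c)^2) by ring.
    set (q := d^2 + (x - c)^2) in *. set (r := sqrt q) in *.
    assert (Hq : q = r * r) by (unfold r; rewrite sqrt_sqrt; lra).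
    rewrite Hq. field. lra.
Qed.

Lemma pos2 (p q : pt) : p <> q -> 0 < (fst p - fst q)^2 + (snd p - snd q)^2.
Proof.
  destruct p as [p1 p2], q as [q1 q2]; simpl; intros H.
  destruct (Req_dec p1 q1); destruct (Req_dec p2 q2); subst.
  - congruence.
  - assert (0 < (p2-q2)^2) by (apply pow2_gt_0; lra). nra.
  - assert (0 < (p1-q1)^2) by (apply pow2_gt_0; lra). nra.
  - assert (0 < (p1-q1)^2) by (apply pow2_gt_0; lra). nra.
Qed.

Theorem proposition1 (A B C : pt) (wA wB wC : R) :
  A <> B -> B <> C -> A <> C ->
  Deff wA wB wC A B C = - Deff wC wB wA C B A.
Proof.
  intros HAB HBC HAC.
  assert (H1 := pos2 B C HBC).
  assert (H2 := pos2 B A (not_eq_sym HAB)).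
  destruct A as [a1 a2], B as [b1 b2], C as [c1 c2]. simpl in *.
  unfold Deff, grad, dot, uvel, vscale, perp, vsub, enorm; simpl.
  rewrite (d1 _ c1 (b2 - c2) b1 H1), (d2 _ c2 (b1 - c1) b2) by lra.
  rewrite (d1 _ a1 (b2 - a2) b1 H2), (d2 _ a2 (b1 - a1) b2) by lra.
  rewrite !Rmult_1_r, !sqrt_sqrt by nra.
  simpl. rewrite !Rmult_1_r in *.
  assert (PI > 0) by exact PI_RGT_0.
  field. repeat split; lra.
Qed.
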